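(* Let $\theta\ge0$, $\omega\in\mathbb R$, $a\in\mathbb R$. For every polynomial $f$, $$\bigl(\exp(a\Delta_{\theta,\omega})f\bigr)(z)=\bigl(\exp(\omega^{-1}(e^{a\omega}-1)\Delta_\theta)f\bigr)(e^{a\omega}z),$$ where all operator exponentials are defined by their (here finite) power series; i.e. $\exp(a\Delta_{\theta,\omega})=\exp(a\omega zD)\exp(\omega^{-1}(e^{a\omega}-1)\Delta_\theta)$ on polynomials.
   Context: $D=d/dz$, $\Delta_{\theta,\omega}=(\theta+\omega z)D+zD^2$, $\Delta_\theta=(\theta+zD)D$; $\exp(\gamma A)f=\sum_{k\ge0}\frac{\gamma^k}{k!}A^kf$, and $\exp(\gamma zD)f(z)=f(e^\gamma z)$. For $\omega=0$, $\omega^{-1}(e^{a\omega}-1)$ means $a$. *)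

(* Defs.v *)
From HB Require Import structures.
From mathcomp Require Import all_boot all_order all_algebra.
From mathcomp Require Import all_classical all_reals all_analysis.
Set Implicit Arguments. Unset Strict Implicit. Unset Printing Implicit Defensive.
Import Order.TTheory GRing.Theory Num.Theory.
Import numFieldNormedType.Exports.
Local Open Scope classical_set_scope.
Local Open Scope ring_scope.

Definition Delta_thom (R : realType) (th om : R) (f : {poly R}) : {poly R} :=
  (th%:P + om *: 'X) * f^`() + 'X * f^`(2).

Definition Delta_th (R : realType) (th : R) (f : {poly R}) : {poly R} :=
  th *: f^`() + 'X * f^`(2).

Definition exp_partial (R : realType) (A : {poly R} -> {poly R}) (g : R)
  (f : {poly R}) (N : nat) : {poly R} :=
  \sum_(k < N) ((g ^+ k) / (k`!)%:R) *: iter k A f.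

(* exp(gamma A) f = h : the power series converges (coefficientwise) to h *)
Definition op_exp_series (R : realType) (A : {poly R} -> {poly R}) (g : R)
  (f h : {poly R}) : Prop :=
  forall i : nat, (fun N => (exp_partial A g f N)`_i) @ \oo --> h`_i.

(* omega^{-1}(e^{a omega} - 1), read as a when omega = 0 *)
Definition expcoef (R : realType) (om a : R) : R :=
  if om == 0 then a else om^-1 * (expR (a * om) - 1).

(* Main.v *)
Require Import Defs.
From HB Require Import structures.
From mathcomp Require Import all_boot all_order all_algebra.
From mathcomp Require Import all_classical all_reals all_analysis.
From mathcomp Require Import ring lra zify.
From Stdlib Require Import Lia.
Set Implicit Arguments. Unset Strict Implicit.
Import Order.TTheory GRing.Theory Num.Theory.
Import numFieldNormedType.Exports.
Local Open Scope classical_set_scope.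
Local Open Scope ring_scope.

Section Gen.
Variable R : realType.
Implicit Types u v : {poly R}.

Lemma iterLinD (A : {poly R} -> {poly R}) (AD : forall u v, A (u + v) = A u + A v)
  k u v : iter k A (u + v) = iter k A u + iter k A v.
Proof. by elim: k => //= k ->; rewrite AD. Qed.

Lemma iterLinZ (A : {poly R} -> {poly R}) (AZ : forall c u, A (c *: u) = c *: A u)
  k c u : iter k A (c *: u) = c *: iter k A u.
Proof. by elim: k => //= k ->; rewrite AZ. Qed.

Lemma lin0 (A : {poly R} -> {poly R}) (AZ : forall c u, A (c *: u) = c *: A u) :
  A 0 = 0.
Proof. by have := AZ 0 0; rewrite !scale0r. Qed.

Lemma lin_sum (A : {poly R} -> {poly R}) (AD : forall u v, A (u + v) = A u + A v)
  (AZ : forall c u, A (c *: u) = c *: A u) I (r : seq I) (P : pred I) F :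
  A (\sum_(i <- r | P i) F i) = \sum_(i <- r | P i) A (F i).
Proof.
apply: esym; apply: (big_rec2 (fun x y => x = A y)) => [|i y1 y2 _ ->].
  by rewrite (lin0 AZ).
by rewrite AD.
Qed.

Variable th : R.
Local Notation L := (Delta_th th).

Lemma LD u v : L (u + v) = L u + L v.
Proof. by rewrite /Delta_th derivD derivnD scalerDr mulrDr addrACA. Qed.

Lemma LZ c u : L (c *: u) = c *: L u.
Proof.
rewrite /Delta_th derivZ derivnZ scalerDr scalerA mulrC -scalerA.
by rewrite scalerAr.
Qed.

Lemma size_L u m : (size u <= m.+1)%N -> (size (L u) <= m)%N.
Proof.
move=> /leq_sizeP H; apply/leq_sizeP => j hj.
rewrite /Delta_th coefD coefZ coef_deriv coefXM (H j.+1) // mul0rn mulr0 add0r.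
case: j hj => [|j] hj //=.
idtac.
by rewrite !coef_deriv (H j.+2) ?mul0rn.
Qed.

Lemma size_iterL k u m : (size u <= m)%N -> (size (iter k L u) <= m - k)%N.
Proof.
elim: k => [|k IH] /= hu; first by rewrite subn0.
apply: size_L; apply: leq_trans (IH hu) _; lia.
Qed.

Lemma iterL_nil k u : (size u <= k)%N -> iter k L u = 0.
Proof.
move=> hu; apply/eqP; rewrite -size_poly_leq0.
by have := size_iterL k (leqnn (size u)); rewrite (eqnP _ : size u - k = 0)%N //; rewrite subn_eq0.
Qed.

Lemma tri (V : nmodType) N (G : nat -> nat -> V) :
  \sum_(0 <= n < N) \sum_(0 <= i < n.+1) G i (n - i)%N =
  \sum_(0 <= k < N) \sum_(0 <= j < (N - k)%N) G k j.
Proof.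
elim: N => [|N IH]; first by rewrite !big_geq.
rewrite big_nat_recr //= IH [RHS]big_nat_recr //= subSnn big_nat1.
rewrite big_nat_recr //= subnn.
have E : \sum_(0 <= k < N) \sum_(0 <= j < (N.+1 - k)%N) G k j =
  \sum_(0 <= k < N) (\sum_(0 <= j < (N - k)%N) G k j + G k (N - k)%N).
  apply: eq_big_nat => k /andP[_ hk]; rewrite subSn; last exact: ltnW.
  by rewrite big_nat_recr.
by rewrite E big_split /= addrA.
Qed.

Local Notation Ex N s u := (exp_partial L s u N).

Lemma fact_neq0 k : ((k`!)%:R : R) != 0.
Proof. by rewrite pnatr_eq0 -lt0n fact_gt0. Qed.

Lemma ExD N s u v : Ex N s (u + v) = Ex N s u + Ex N s v.
Proof.
by rewrite /exp_partial -big_split /=; apply: eq_bigr => k _; rewrite iterLinD ?scalerDr //; apply: LD.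
Qed.

Lemma ExZ N s c u : Ex N s (c *: u) = c *: Ex N s u.
Proof.
rewrite /exp_partial scaler_sumr; apply: eq_bigr => k _.
by rewrite iterLinZ ?scalerA 1?mulrC //; apply: LZ.
Qed.

Lemma Ex_sum N s I (r : seq I) (P : pred I) F :
  Ex N s (\sum_(i <- r | P i) F i) = \sum_(i <- r | P i) Ex N s (F i).
Proof.
apply: (lin_sum (A := fun u => Ex N s u)); [exact: ExD | exact: ExZ].
Qed.

Lemma Ex_widen N M s u : (size u <= N)%N -> (N <= M)%N -> Ex M s u = Ex N s u.
Proof.
move=> hu hNM; rewrite /exp_partial -!(big_mkord xpredT (fun k => (s ^+ k / (k`!)%:R) *: iter k L u)).
rewrite (big_cat_nat (leq0n N) hNM) /= [X in _ + X]big1_seq ?addr0 //.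
move=> k; rewrite mem_index_iota /= => /andP[hk _].
by rewrite iterL_nil ?scaler0 //; apply: leq_trans hu hk.
Qed.

Lemma Ex0 N u : (size u <= N)%N -> Ex N 0 u = u.
Proof.
case: N => [|N] hu.
  by move: hu; rewrite leqn0 size_poly_eq0 => /eqP ->; rewrite /exp_partial big_ord0.
rewrite /exp_partial big_ord_recl /= expr0 fact0 divr1 scale1r big1 ?addr0 //.
by move=> k _; rewrite expr0n /= mul0r scale0r.
Qed.

Lemma iterL_sum k I (r : seq I) (P : pred I) F :
  iter k L (\sum_(i <- r | P i) F i) = \sum_(i <- r | P i) iter k L (F i).
Proof.
apply: (lin_sum (A := iter k L)); [apply: iterLinD; exact: LD | apply: iterLinZ; exact: LZ].
Qed.

Lemma ExA N s t u : (size u <= N)%N -> Ex N s (Ex N t u) = Ex N (s + t) u.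
Proof.
move=> hu.
pose a := fun k => s ^+ k / (k`!)%:R; pose b := fun k => t ^+ k / (k`!)%:R.
pose G k j := (a k * b j) *: iter (k + j)%N L u.
have LHS : Ex N s (Ex N t u) = \sum_(0 <= k < N) \sum_(0 <= j < (N - k)%N) G k j.
  rewrite /exp_partial.
  rewrite -(big_mkord xpredT (fun k => (s ^+ k / (k`!)%:R) *: iter k L (\sum_(j < N) (t ^+ j / (j`!)%:R) *: iter j L u))).
  apply: eq_big_nat => k /andP[_ hk].
  rewrite iterL_sum scaler_sumr.
  rewrite -(big_mkord xpredT (fun j => (s ^+ k / (k`!)%:R) *: iter k L ((t ^+ j / (j`!)%:R) *: iter j L u))).
  rewrite (big_cat_nat (leq0n (N - k)) (leq_subr k N)) /= [X in _ + X]big1_seq ?addr0.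
    apply: eq_big_nat => j _; rewrite iterLinZ; last exact: LZ.
    by rewrite scalerA -iterD.
  move=> j; rewrite mem_index_iota /= => /andP[hj _].
  rewrite iterLinZ; last exact: LZ.
  rewrite -iterD iterL_nil ?scaler0 ?scalerA //; apply: leq_trans hu _; lia.
have RHS : Ex N (s + t) u = \sum_(0 <= n < N) \sum_(0 <= i < n.+1) G i (n - i)%N.
  rewrite /exp_partial -(big_mkord xpredT (fun n => ((s + t) ^+ n / (n`!)%:R) *: iter n L u)).
  apply: eq_big_nat => n _.
  rewrite big_mkord addrC exprDn mulr_suml scaler_suml; apply: eq_bigr => i _.
  have hi : (i <= n)%N by rewrite -ltnS ltn_ord.
  rewrite /G subnKC //; congr (_ *: _).
  have hf : ((n`!)%:R : R) = ('C(n, i))%:R * ((i`!)%:R * ((n - i)`!)%:R).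
    by rewrite -!natrM bin_fact.
  have hC : (('C(n, i))%:R : R) != 0 by rewrite pnatr_eq0 -lt0n bin_gt0.
  have h1 := fact_neq0 i; have h2 := fact_neq0 (n - i).
  rewrite /a /b hf -mulr_natr; field.
  by rewrite hC h1 h2.
by rewrite LHS RHS tri.
Qed.

Definition Z (u : {poly R}) : {poly R} := 'X * u^`().

Lemma ZD u v : Z (u + v) = Z u + Z v.
Proof. by rewrite /Z derivD mulrDr. Qed.

Lemma ZZ c u : Z (c *: u) = c *: Z u.
Proof. by rewrite /Z derivZ scalerAr. Qed.

Lemma LN u : L (- u) = - L u.
Proof. by rewrite -scaleN1r LZ scaleN1r. Qed.

Lemma LB u v : L (u - v) = L u - L v.
Proof. by rewrite LD LN. Qed.

Lemma d2 (p : {poly R}) : p^`(2) = p^`()^`().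
Proof. by []. Qed.

Lemma ZL u : Z (L u) = L (Z u) - L u.
Proof.
rewrite /Z /Delta_th !d2.
rewrite ?(derivD, derivZ, derivM, derivX, derivC).
rewrite -!mul_polyC; ring.
Qed.

Lemma Z_iterL k u : Z (iter k L u) = iter k L (Z u) - k%:R *: iter k L u.
Proof.
elim: k => [|k IH] /=; first by rewrite scale0r subr0.
rewrite ZL IH LB LZ -/(iter k.+1 L _) -/(iter k.+1 L (Z u)).
by rewrite -addrA -opprD -[X in _ - (_ + X)]scale1r -scalerDl -natr1.
Qed.

Lemma Z_sum I (r : seq I) (P : pred I) F :
  Z (\sum_(i <- r | P i) F i) = \sum_(i <- r | P i) Z (F i).
Proof. apply: (lin_sum (A := Z)); [exact: ZD | exact: ZZ]. Qed.

Lemma L_sum I (r : seq I) (P : pred I) F :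
  L (\sum_(i <- r | P i) F i) = \sum_(i <- r | P i) L (F i).
Proof. apply: (lin_sum (A := L)); [exact: LD | exact: LZ]. Qed.

Lemma Z_Ex N s u : (size u <= N)%N ->
  Z (Ex N s u) = Ex N s (Z u) - s *: L (Ex N s u).
Proof.
move=> hu.
have -> : Z (Ex N s u) = Ex N s (Z u) -
   \sum_(k < N) ((s ^+ k / (k`!)%:R) * k%:R) *: iter k L u.
  rewrite /exp_partial Z_sum -sumrB; apply: eq_bigr => k _.
  by rewrite ZZ Z_iterL scalerBr scalerA.
congr (_ - _).
rewrite /exp_partial L_sum scaler_sumr.
case: N hu => [|N] hu; first by rewrite !big_ord0.
rewrite big_ord_recl /= mulr0 scale0r add0r big_ord_recr /=.
rewrite LZ (_ : L (iter N L u) = iter N.+1 L u) // iterL_nil // !scaler0 addr0.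
apply: eq_bigr => k _; rewrite LZ scalerA; congr (_ *: _).
rewrite /bump /= add1n factS natrM exprS.
have h1 := fact_neq0 k.
have h2 : ((k.+1)%:R : R) != 0 by rewrite pnatr_eq0.
field; by rewrite h1 addrC natr1 h2.
Qed.

Variable om : R.
Local Notation Dl := (Delta_thom th om).

Lemma DlE u : Dl u = om *: Z u + L u.
Proof.
rewrite /Delta_thom /Delta_th /Z mulrDl addrA; congr (_ + _).
by rewrite mul_polyC addrC -scalerAl.
Qed.

Lemma DlD u v : Dl (u + v) = Dl u + Dl v.
Proof. by rewrite !DlE ZD LD scalerDr addrACA. Qed.

Lemma DlZ c u : Dl (c *: u) = c *: Dl u.
Proof. by rewrite !DlE ZZ LZ [RHS]scalerDr !scalerA mulrC. Qed.

Lemma Dl_Ex N s u : om * s = 1 -> (size u <= N)%N ->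
  Dl (Ex N s u) = om *: Ex N s (Z u).
Proof.
move=> hs hu; rewrite DlE Z_Ex // scalerBr scalerA hs scale1r.
by rewrite subrK.
Qed.

Lemma ZXn m : Z 'X^m = m%:R *: 'X^m.
Proof.
rewrite /Z derivXn scaler_nat; case: m => [|m]; first by rewrite !mulr0n mulr0.
by rewrite mulrnAr -exprS.
Qed.

Lemma Dl_eig N s m : om * s = 1 -> (m < N)%N ->
  Dl (Ex N s 'X^m) = (om * m%:R) *: Ex N s 'X^m.
Proof.
move=> hs hm; rewrite Dl_Ex // ?size_polyXn // ZXn ExZ scalerA //.
Qed.

Lemma iterDl_eig N s m k : om * s = 1 -> (m < N)%N ->
  iter k Dl (Ex N s 'X^m) = ((om * m%:R) ^+ k) *: Ex N s 'X^m.
Proof.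
move=> hs hm; elim: k => [|k IH] /=; first by rewrite scale1r.
by rewrite IH DlZ Dl_eig // scalerA exprS mulrC.
Qed.

Definition Sl (l : R) (u : {poly R}) : {poly R} := u \Po (l *: 'X).

Lemma SlD l u v : Sl l (u + v) = Sl l u + Sl l v.
Proof. exact: comp_polyD. Qed.

Lemma SlZ l c u : Sl l (c *: u) = c *: Sl l u.
Proof. exact: comp_polyZ. Qed.

Lemma Sl_sum l I (r : seq I) (P : pred I) F :
  Sl l (\sum_(i <- r | P i) F i) = \sum_(i <- r | P i) Sl l (F i).
Proof. apply: (lin_sum (A := Sl l)); [exact: SlD | exact: SlZ]. Qed.

Lemma L_Sl l u : L (Sl l u) = l *: Sl l (L u).
Proof.
rewrite /Sl /Delta_th !d2 !deriv_comp !derivM !deriv_comp derivZ derivX.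
rewrite comp_polyD comp_polyZ comp_polyM comp_polyX.
rewrite ?(derivZ, derivC, derivX).
rewrite -!mul_polyC; ring.
Qed.

Lemma iterL_Sl l k u : iter k L (Sl l u) = l ^+ k *: Sl l (iter k L u).
Proof.
elim: k => [|k IH] /=; first by rewrite scale1r.
by rewrite IH LZ L_Sl scalerA exprS mulrC.
Qed.

Lemma Ex_Sl N s l u : Ex N s (Sl l u) = Sl l (Ex N (l * s) u).
Proof.
rewrite /exp_partial Sl_sum; apply: eq_bigr => k _.
rewrite iterL_Sl SlZ scalerA exprMn; congr (_ *: _); ring.
Qed.

Lemma compXn m (q : {poly R}) : 'X^m \Po q = q ^+ m.
Proof.
elim: m => [|m IH]; first by rewrite !expr0 -polyC1 comp_polyC.
by rewrite !exprS comp_polyM comp_polyX IH.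
Qed.

Lemma poly_expand N (p : {poly R}) : (size p <= N)%N ->
  p = \sum_(m < N) p`_m *: 'X^m.
Proof.
move=> hp; rewrite -poly_def; apply/polyP => i; rewrite coef_poly.
by case: ltnP => // hi; apply: nth_default; apply: leq_trans hp hi.
Qed.

Lemma size_Ex N s u : (size (Ex N s u) <= size u)%N.
Proof.
rewrite /exp_partial; elim/big_ind: _ => //.
  by rewrite size_poly0.
  by move=> x y hx hy; apply: leq_trans (size_polyD _ _) _; rewrite geq_max hx hy.
move=> k _; apply: leq_trans (size_scale_leq _ _) _.
by have := size_iterL k (leqnn (size u)); move/leq_trans; apply; apply: leq_subr.
Qed.

Lemma conv_nil c u : op_exp_series L c u (Ex (size u) c u).
Proof.
move=> i; apply: cvg_near_cst.
by exists (size u) => // M /= hM; rewrite (Ex_widen c (leqnn _) hM).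
Qed.

End Gen.

Lemma cvg_sum_seq (R : realType) (I : Type) (r : seq I) (F : I -> nat -> R) (l : I -> R) :
  (forall m, ((fun M => F m M) @ \oo --> l m)%classic) ->
  ((fun M => \sum_(m <- r) F m M) @ \oo --> \sum_(m <- r) l m)%classic.
Proof.
move=> hF; elim: r => [|x r IH].
  rewrite big_nil; under eq_fun do rewrite big_nil; exact: cvg_cst.
rewrite big_cons; under eq_fun do rewrite big_cons.
exact: cvgD.
Qed.

Theorem lemma1 (R : realType) (th om a : R) (hth : 0 <= th) (f : {poly R}) :
  exists h : {poly R},
    op_exp_series (Delta_th th) (expcoef om a) f h /\
    op_exp_series (Delta_thom th om) a f (h \Po (expR (a * om) *: 'X)).
Proof.
pose N := size f.
case: (eqVneq om 0) => [om0|om0].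
  exists (exp_partial (Delta_th th) a f N).
  rewrite /expcoef om0 eqxx; split; first exact: conv_nil.
  rewrite mulr0 expR0 scale1r comp_polyXr.
  have -> : Delta_thom th 0 = Delta_th th.
    by apply: funext => u; rewrite /Delta_thom /Delta_th scale0r addr0 mul_polyC.
  exact: conv_nil.
set c := expcoef om a.
have hc : c = om^-1 * (expR (a * om) - 1) by rewrite /c /expcoef (negbTE om0).
exists (exp_partial (Delta_th th) c f N); split; first exact: conv_nil.
set l := expR (a * om); set s := om^-1.
have hs : om * s = 1 by rewrite mulfV.
set g := exp_partial (Delta_th th) (- s) f N.
have hg : (size g <= N)%N := size_Ex _ _ _ _.
have hfg : f = \sum_(m < N) g`_m *: exp_partial (Delta_th th) s 'X^m N.
  transitivity (exp_partial (Delta_th th) s g N).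
    by rewrite /g ExA // subrr Ex0.
  by rewrite {1}(poly_expand hg) Ex_sum; apply: eq_bigr => m _; rewrite ExZ.
have hiter : forall k, iter k (Delta_thom th om) f =
    \sum_(m < N) (g`_m * (om * m%:R) ^+ k) *: exp_partial (Delta_th th) s 'X^m N.
  move=> k; rewrite {1}hfg (lin_sum (A := iter k (Delta_thom th om))); last first.
  - by apply: iterLinZ; exact: DlZ.
  - by apply: iterLinD; exact: DlD.
  apply: eq_bigr => m _; rewrite iterLinZ; last exact: DlZ.
  by rewrite iterDl_eig // scalerA.
have target : exp_partial (Delta_th th) c f N \Po (l *: 'X) =
    \sum_(m < N) (g`_m * l ^+ m) *: exp_partial (Delta_th th) s 'X^m N.
  transitivity (exp_partial (Delta_th th) s (Sl l g) N); last first.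
    rewrite {1}(poly_expand hg) Sl_sum Ex_sum; apply: eq_bigr => m _.
    by rewrite SlZ /Sl compXn exprZn ExZ ExZ scalerA.
  rewrite Ex_Sl /g ExA //; congr (_ \Po _); congr exp_partial.
  by rewrite hc /s -/l mulrBr mulr1 mulrC.
move=> i; rewrite target coef_sum.
have E : (fun M => (exp_partial (Delta_thom th om) a f M)`_i) =
   (fun M => \sum_(m < N) (g`_m * (exp_partial (Delta_th th) s 'X^m N)`_i) *
      series (exp_coeff (a * (om * m%:R))) M).
  apply: funext => M; rewrite [in LHS]/exp_partial coef_sum.
  under eq_bigr do rewrite coefZ hiter coef_sum mulr_sumr.
  rewrite exchange_big /=; apply: eq_bigr => m _.
  rewrite /series /= big_mkord mulr_sumr; apply: eq_bigr => k _.
  rewrite coefZ /exp_coeff /= !exprMn; ring.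
rewrite E.
have -> : \sum_(m < N) ((g`_m * l ^+ m) *: exp_partial (Delta_th th) s 'X^m N)`_i =
   \sum_(m < N) (g`_m * (exp_partial (Delta_th th) s 'X^m N)`_i) * expR (a * (om * m%:R)).
  by apply: eq_bigr => m _; rewrite coefZ mulrA expRM_natr -/l; ring.
apply: (cvg_sum_seq (F := fun (m : 'I_N) M => (g`_m * (exp_partial (Delta_th th) s 'X^m N)`_i) *
      series (exp_coeff (a * (om * m%:R))) M)) => m.
apply: cvgMl_tmp; exact: is_cvg_series_exp_coeff.
Qed.
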